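(* Let $z$ be a positive integer and let $C$ and $D$ be quasi-cyclic LDPC codes with circulant matrices of size $z$, given by model matrices $\mathcal{H}_C$ and $\mathcal{H}_D$ (each with $L$ columns, all entries in $\{0,1,\dots,z-1\}\cup\{\infty\}$). Let $y$ be a positive integer dividing $z$. Let $C'$ (resp. $D'$) be the quasi-cyclic LDPC code with the same model matrix as $C$ (resp. $D$) but with circulant matrices of size $y$, where each finite shift $p$ is interpreted modulo $y$ (i.e. replaced by the $y\times y$ matrix $I_y(1)^{p}$). If $C$ and $D$ satisfy the twisted condition $D^{\perp}\subset C$, then $C'$ and $D'$ satisfy the twisted condition $D'^{\perp}\subset C'$.
   Context: All codes are binary linear codes over $\mathbb{F}_2$. For a linear code $D\subseteq\mathbb{F}_2^n$, its dual is $D^{\perp}=\{d'\in\mathbb{F}_2^n : d\,d'^{T}=0 \text{ for all } d\in D\}$. A pair of codes $C,D$ of the same length satisfies the twisted condition if $D^{\perp}\subset C$; if $H_C,H_D$ are parity-check matrices of $C,D$ (i.e. $C=\{x: H_Cx^T=0\}$, $D=\{x:H_Dx^T=0\}$), this is equivalent to $H_C H_D^{T}=0$. For a positive integer $z$, let $I_z(1)$ be the $z\times z$ circulant permutation matrix of a single circular right shift (entries $1$ at positions $(i,i+1)$ for $i<z$ and $(z,1)$, zero elsewhere), and $I_z(b)=I_z(1)^b$. A quasi-cyclic LDPC code with circulant matrices of size $z$ is specified by a model matrix $\mathcal{H}=(p(i,j))$ of size $J\times L$ with entries in $\{0,1,\dots,z-1\}\cup\{\infty\}$; its parity-check matrix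 $H$ is the $zJ\times zL$ binary matrix obtained by replacing each entry $p(i,j)\neq\infty$ by $I_z(p(i,j))$ and each $\infty$ by the $z\times z$ zero matrix, and the code is $\{x\in\mathbb{F}_2^{zL}: Hx^T=0\}$. The base matrix of the code is the $J\times L$ binary matrix with entry $1$ where $p(i,j)\neq\infty$ and $0$ where $p(i,j)=\infty$. *)

(* Defs.v *)
From HB Require Import structures.
From mathcomp Require Import all_boot all_algebra.
Set Implicit Arguments. Unset Strict Implicit. Unset Printing Implicit Defensive.
Import GRing.Theory.
Local Open Scope ring_scope.

(* A model matrix of size J x L: entry None stands for "infinity"
   (zero block), Some b for the circulant I_z(b). *)
Definition model_matrix (J L : nat) := 'I_J -> 'I_L -> option nat.

(* The block I_z(b) = I_z(1)^b has (0-based)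
   entry 1 at (a, (a + b) mod z).  Hence an entry p is read modulo z. *)
Definition qc_pcm (J L : nat) (P : model_matrix J L) (z : nat)
  : 'M['F_2]_(J * z, L * z) :=
  \matrix_(r < J * z, c < L * z)
    match insub (r %/ z)%N : option 'I_J, insub (c %/ z)%N : option 'I_L with
    | Some i, Some j =>
        match P i j with
        | Some b => ((c %% z)%N == ((r %% z) + b) %% z)%N%:R
        | None => 0
        end
    | _, _ => 0
    end.

Definition code_of (m n : nat) (H : 'M['F_2]_(m, n)) : 'rV['F_2]_n -> Prop :=
  fun x => H *m x^T = 0.

Definition dual_code (n : nat) (D : 'rV['F_2]_n -> Prop) : 'rV['F_2]_n -> Prop :=
  fun x => forall d, D d -> d *m x^T = 0.

Definition twisted (n : nat) (C D : 'rV['F_2]_n -> Prop) : Prop :=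
  forall x, dual_code D x -> C x.

Definition qc_code (J L : nat) (P : model_matrix J L) (z : nat) :=
  code_of (qc_pcm P z).

Definition model_entries_lt (J L : nat) (P : model_matrix J L) (z : nat) :=
  forall i j b, P i j = Some b -> (b < z)%N.

Arguments qc_pcm {J L} P z.
Arguments qc_code {J L} P z _.
Arguments model_entries_lt {J L} P z.

(* Main.v *)
Require Import Defs.
From mathcomp Require Import all_boot all_algebra.
Import GRing.Theory.

Lemma twisted_iff (n m1 m2 : nat) (HC : 'M['F_2]_(m1,n)) (HD : 'M['F_2]_(m2,n)) :
  twisted (code_of HC) (code_of HD) <-> (HC *m HD^T = 0)%R.
Proof.
split.
- move=> Ht; apply/matrixP => i r.
  have Hr : code_of HC (row r HD).
    apply: Ht => d Hd.
    by rewrite -[(d *m _)%R]trmxK trmx_mul trmxK -row_mul Hd row0 trmx0.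
  move: Hr; rewrite /code_of => /matrixP/(_ i ord0).
  by rewrite !mxE => H; rewrite -[RHS]H; apply: eq_bigr => c _; rewrite !mxE.
- move=> H0 x Hx; apply/row_matrixP => r.
  rewrite row_mul row0; apply: Hx.
  by rewrite /code_of -[(HD *m _)%R]trmxK trmx_mul trmxK -row_mul H0 row0 trmx0.
Qed.

Lemma sum_split (L n : nat) (F : nat -> 'F_2) :
  (\sum_(c < L*n) F c = \sum_(j < L) \sum_(b < n) F (j*n+b)%N)%R.
Proof.
elim: L => [|L IH]; first by rewrite mul0n !big_ord0.
rewrite big_ord_recr /= -IH -!(big_mkord xpredT) mulSnr.
rewrite (@big_cat_nat _ _ _ (L*n) 0 (L*n+n) _ _ (leq0n _) (leq_addr n (L*n))) /=; congr (_ + _)%R.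
rewrite -{1}(add0n (L*n)) big_addn addKn big_mkord; apply: eq_bigr => b _; by rewrite addnC.
Qed.

Lemma insub_ord (L : nat) (j : 'I_L) x : x = val j -> insub x = Some j.
Proof. by move->; rewrite valK. Qed.

Lemma sum_eq2 (n x x' : nat) : x < n -> x' < n ->
  (\sum_(b < n) (((val b == x)%:R * (val b == x')%:R : 'F_2)) = (x == x')%:R)%R.
Proof.
move=> hx hx'; rewrite (bigD1 (Ordinal hx)) //= eqxx mul1r big1 ?addr0 //.
move=> b /negbTE; rewrite -(inj_eq val_inj) /= => ->; by rewrite mul0r.
Qed.

Definition S (n : nat) (o1 o2 : option nat) (a a' : nat) : 'F_2 :=
  match o1, o2 with
  | Some p1, Some p2 => (((a + p1) %% n == (a' + p2) %% n)%N%:R)%R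
  | _, _ => 0%R end.

Lemma entry J1 J2 L (P1 : model_matrix J1 L) (P2 : model_matrix J2 L) n (n0 : 0 < n)
  (r : 'I_(J1*n)) (r' : 'I_(J2*n)) (i : 'I_J1) (k : 'I_J2) :
  val i = r %/ n -> val k = r' %/ n ->
  (qc_pcm P1 n *m (qc_pcm P2 n)^T)%R r r' =
  (\sum_(j < L) S n (P1 i j) (P2 k j) (r %% n) (r' %% n))%R.
Proof.
move=> hi hk; rewrite !mxE.
under eq_bigr do rewrite !mxE.
rewrite (insub_ord _ _ _ (esym hi)) (insub_ord _ _ _ (esym hk)).
pose F (c : nat) : 'F_2 :=
  (match insub (c %/ n)%N with
   | Some j => match P1 i j with Some b => (c == r %% n + b %[mod n])%:R | None => 0 end
   | None => 0 end *
   match insub (c %/ n)%N with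
   | Some j => match P2 k j with Some b => (c == r' %% n + b %[mod n])%:R | None => 0 end
   | None => 0 end)%R.
rewrite (sum_split L n F); apply: eq_bigr => j _; rewrite /F.
have hj b : b < n -> insub ((j * n + b) %/ n) = Some j.
  by move=> hb; apply: insub_ord; rewrite divnMDl // divn_small ?addn0.
have hb b : b < n -> (j * n + b) %% n = b.
  by move=> hb; rewrite modnMDl modn_small.
under eq_bigr => b _ do rewrite (hj b (ltn_ord b)) (hb b (ltn_ord b)).
rewrite /S; case: (P1 i j) => [p1|]; case: (P2 k j) => [p2|];
  try by rewrite big1 // => b _; rewrite ?mul0r ?mulr0.
by rewrite sum_eq2 ?ltn_mod // eq_sym.
Qed.

Lemma uniq_t (m y A B t1 t2 : nat) : 0 < y -> t1 < m -> t2 < m ->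
  A + t1*y = B %[mod m*y] -> A + t2*y = B %[mod m*y] -> t1 = t2.
Proof.
move=> y0 h1 h2 e1 e2.
have : A + t1*y == A + t2*y %[mod m*y] by rewrite e1 e2.
rewrite eqn_modDl -!muln_modl !modn_small // eqn_pmul2r //.
by move/eqP.
Qed.

Lemma exist_t (m y A B : nat) : 0 < m -> 0 < y -> A %% y = B %% y ->
  exists2 t, t < m & A + t*y = B %[mod m*y].
Proof.
move=> m0 y0 hAB.
set z := m * y.
have z0 : 0 < z by rewrite muln_gt0 m0.
set A' := A %% z; set B' := B %% z.
have hA : A' < z by rewrite ltn_mod.
have hyz : y %| z by rewrite dvdn_mull.
have hd : y %| B' + z - A'.
  rewrite -(eqn_mod_dvd _ ); last by apply: leq_trans (ltnW hA) (leq_addl _ _).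
  have zy : z %% y = 0 by apply/eqP.
  by rewrite -modnDmr zy addn0 /B' /A' !(modn_dvdm _ hyz) hAB.
set q := (B' + z - A') %/ y.
have eq1 : A' + q * y = B' + z.
  by rewrite divnK // addnC subnK // (leq_trans (ltnW hA) (leq_addl _ _)).
apply: (@ex_intro2 _ _ _ (q %% m)); first by rewrite ltn_mod.
have eq2 : q * y = q %% m * y + q %/ m * z.
  by rewrite {1}(divn_eq q m) mulnDl addnC /z mulnA.
rewrite -modnDml -/A'.
rewrite -(modnMDl (q %/ m)) addnA (addnC _ A') -addnA (addnC (q %/ m * z)) -eq2 eq1 modnDr.
by rewrite /B' modn_mod.
Qed.

Lemma key (m y A B : nat) : 0 < m -> 0 < y ->
  ((((A %% y)%N == (B %% y)%N)%:R : 'F_2) =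
   \sum_(t < m) (((A + t*y) %% (m*y))%N == (B %% (m*y))%N)%:R)%R.
Proof.
move=> m0 y0.
case: eqP => hAB.
- have [t0 ht0 e0] := @exist_t m y A B m0 y0 hAB.
  rewrite (bigD1 (Ordinal ht0)) //= e0 eqxx big1 ?addr0 //.
  move=> t /negP nt; case: eqP => // et; exfalso; apply: nt.
  by apply/eqP/val_inj => /=; apply: (@uniq_t m y A B _ _ y0 (ltn_ord t) ht0 et e0).
- rewrite big1 // => t _; case: eqP => // et; exfalso; apply: hAB.
  have hyz : y %| m*y by rewrite dvdn_mull.
  by rewrite -(modnMDl t A) addnC -(modn_dvdm _ hyz) et (modn_dvdm _ hyz).
Qed.

Lemma S_split (m y : nat) o1 o2 a a' : 0 < m -> 0 < y ->
  S y o1 o2 a a' = (\sum_(t < m) S (m*y) o1 o2 ((a + t*y) %% (m*y)) (a' %% (m*y)))%R.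
Proof.
move=> m0 y0; rewrite /S; case: o1 => [p1|]; case: o2 => [p2|];
  try by rewrite big1.
rewrite (@key m y (a + p1) (a' + p2) m0 y0); apply: eq_bigr => t _.
by rewrite !modnDml addnAC.
Qed.

Lemma zero_entry J1 J2 L (P1 : model_matrix J1 L) (P2 : model_matrix J2 L) n (n0 : 0 < n)
  (i : 'I_J1) (k : 'I_J2) a1 a2 : a1 < n -> a2 < n ->
  (qc_pcm P1 n *m (qc_pcm P2 n)^T)%R = 0%R ->
  (\sum_(j < L) S n (P1 i j) (P2 k j) a1 a2)%R = 0%R.
Proof.
move=> h1 h2 H0.
have d1 : (i * n + a1) %/ n = i by rewrite divnMDl // divn_small // addn0.
have d2 : (k * n + a2) %/ n = k by rewrite divnMDl // divn_small // addn0.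
have l1 : i * n + a1 < J1 * n by rewrite -ltn_divLR // d1.
have l2 : k * n + a2 < J2 * n by rewrite -ltn_divLR // d2.
have := @entry J1 J2 L P1 P2 n n0 (Ordinal l1) (Ordinal l2) i k (esym d1) (esym d2).
by rewrite H0 mxE /= !modnMDl !modn_small.
Qed.

Theorem mainTheorem1 (z y JC JD L : nat)
  (HC : model_matrix JC L) (HD : model_matrix JD L) :
  (0 < z)%N -> (0 < y)%N -> (y %| z)%N ->
  model_entries_lt HC z -> model_entries_lt HD z ->
  twisted (qc_code HC z) (qc_code HD z) ->
  twisted (qc_code HC y) (qc_code HD y).
Proof.
move=> z0 y0 yz _ _; rewrite /qc_code => /twisted_iff H0; apply/twisted_iff.
set m := z %/ y.
have hz : z = m * y by rewrite divnK.
have m0 : 0 < m by rewrite divn_gt0 // dvdn_leq.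
move: H0; rewrite hz => H0.
apply/matrixP => r r'.
have li : r %/ y < JC by rewrite ltn_divLR.
have lk : r' %/ y < JD by rewrite ltn_divLR.
rewrite (@entry JC JD L HC HD y y0 r r' (Ordinal li) (Ordinal lk)) // mxE.
under eq_bigr do rewrite (@S_split m y _ _ _ _ m0 y0).
rewrite exchange_big /= big1 // => t _.
apply: zero_entry; rewrite ?ltn_mod ?muln_gt0 ?m0 //.
Qed.
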